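(* Every unit interval graph has twin-width at most $2$.
   Context: A unit interval graph is the intersection graph of a finite family of closed intervals of the real line all having the same length. A trigraph $H$ consists of a vertex set $V(H)$ and two disjoint sets of unordered pairs of distinct vertices: black edges $E(H)$ and red edges $R(H)$. Two vertices are adjacent (neighbors) if they are joined by a black or a red edge. The red graph of $H$ is the graph $(V(H),R(H))$; $H$ is a $d$-trigraph if its red graph has maximum degree at most $d$. A graph is a trigraph with no red edges. Contracting two distinct vertices $u,v$ of a trigraph $H$ yields the trigraph obtained by deleting $u$ and $v$ and adding a new vertex $z$ such that, for every other vertex $x$: $zx$ is a black edge if both $ux$ and $vx$ are black edges; $zx$ is not an edge if $x$ is adjacent to neither $u$ nor $v$; and $zx$ is a red edge otherwise. All edges not incident to $u$ or $v$ are unchanged. A $d$-sequence of an $n$-vertex graph $G$ is a sequence of $d$-trigraphs $G=G_n,G_{n-1},\dots,G_1$ such that $G_1$ has a single vertex and each $G_{i-1}$ is obtained from $G_i$ by one contraction (so $G_i$ has $i$ vertices). The twin-width $\mathrm{tww}(G)$ of $G$ is the minimum $d$ such that $G$ admits a $d$-sequence. *)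

(* Defs.v *)
From Stdlib Require Import Reals.
From mathcomp Require Import all_boot.

Set Implicit Arguments.
Unset Strict Implicit.
Unset Printing Implicit Defensive.

Definition simple_graph (T : finType) (e : rel T) : Prop :=
  symmetric e /\ irreflexive e.

Definition unit_interval_graph (T : finType) (e : rel T) : Prop :=
  exists (L : R) (a : T -> R), Rlt 0 L /\
    forall x y : T, x != y ->
      (e x y <-> exists t : R,
          (Rle (a x) t /\ Rle t (a x + L)) /\ (Rle (a y) t /\ Rle t (a y + L))).

Record trigraph (T : finType) := Trigraph {
  tverts : {set T};
  tblack : rel T;
  tred   : rel T
}.

Definition tadj (T : finType) (H : trigraph T) (x y : T) : bool :=
  tblack H x y || tred H x y.

Definition graph_trigraph (T : finType) (e : rel T) : trigraph T :=
  @Trigraph T setT e (fun _ _ => false).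

(* Contraction of u and v into a new vertex z (z is any name not among the
   remaining vertices V(H) \ {u,v}). *)
Definition contract (T : finType) (H : trigraph T) (u v z : T) : trigraph T :=
  let V' := z |: (tverts H :\ u :\ v) in
  let blkz y := tblack H u y && tblack H v y in
  let redz y := ~~ blkz y && (tadj H u y || tadj H v y) in
  @Trigraph T V'
    (fun x y => [&& x \in V', y \in V', x != y &
       if x == z then blkz y else if y == z then blkz x else tblack H x y])
    (fun x y => [&& x \in V', y \in V', x != y &
       if x == z then redz y else if y == z then redz x else tred H x y]).

Definition contraction_step (T : finType) (H H' : trigraph T) : Prop :=
  exists u v z : T, [/\ u \in tverts H, v \in tverts H, u != v,
     z \notin (tverts H :\ u :\ v) & H' = contract H u v z].

Definition d_trigraph (T : finType) (d : nat) (H : trigraph T) : Prop :=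
  forall x, x \in tverts H -> #|[set y in tverts H | tred H x y]| <= d.

(* A d-sequence of the graph (T, e), with n = #|T|:
   s 0 = G_n = G, s i = G_{n-i}, each s (i+1) obtained from s i by one
   contraction, all are d-trigraphs, and s (n-1) = G_1 has one vertex. *)
Definition d_sequence (T : finType) (e : rel T) (d : nat)
    (s : nat -> trigraph T) : Prop :=
  [/\ s 0 = graph_trigraph e,
      (forall i, i.+1 < #|T| -> contraction_step (s i) (s i.+1)),
      (forall i, i < #|T| -> d_trigraph d (s i)) &
      #|tverts (s #|T|.-1)| = 1].

Definition twin_width_le (T : finType) (e : rel T) (d : nat) : Prop :=
  exists s : nat -> trigraph T, d_sequence e d s.

(* Main.v *)
Require Import Defs.
From Stdlib Require Import Reals.
From Stdlib Require Import Lra Lia ZArith ClassicalEpsilon.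
From mathcomp Require Import all_boot zify.

Set Implicit Arguments.
Unset Strict Implicit.
Unset Printing Implicit Defensive.

Definition clsf (T : finType) (f : T -> T) (x : T) : pred T := fun a => f a == x.
Definition allp (T : finType) (e : rel T) (P Q : pred T) : bool :=
  [forall a, forall b, (P a && Q b) ==> e a b].
Definition adjp (T : finType) (e : rel T) (P Q : pred T) : bool :=
  [exists a, exists b, [&& P a, Q b & e a b]].
Definition blk (T : finType) (e : rel T) (f : T -> T) (x y : T) : bool :=
  (x != y) && allp e (clsf f x) (clsf f y).
Definition mix (T : finType) (e : rel T) (f : T -> T) (x y : T) : bool :=
  [&& x != y, adjp e (clsf f x) (clsf f y) & ~~ allp e (clsf f x) (clsf f y)].
Definition reps (T : finType) (f : T -> T) : {set T} := [set x | f x == x].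
Definition merge (T : finType) (f : T -> T) (u v : T) : T -> T :=
  fun y => if f y == v then u else f y.
Definition RepT (T : finType) (e : rel T) (H : trigraph T) (f : T -> T) : Prop :=
  tverts H = reps f /\ forall x y, x \in reps f -> y \in reps f ->
    tblack H x y = blk e f x y /\ tred H x y = mix e f x y.

Lemma allp_ext (T : finType) (e : rel T) (P P' Q Q' : pred T) :
  P =1 P' -> Q =1 Q' -> allp e P Q = allp e P' Q'.
Proof.
move=> hP hQ; apply: eq_forallb => a; apply: eq_forallb => b.
by rewrite hP hQ.
Qed.

Lemma adjp_ext (T : finType) (e : rel T) (P P' Q Q' : pred T) :
  P =1 P' -> Q =1 Q' -> adjp e P Q = adjp e P' Q'.
Proof.
move=> hP hQ; apply: eq_existsb => a; apply: eq_existsb => b.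
by rewrite hP hQ.
Qed.

Lemma allpUl (T : finType) (e : rel T) (P1 P2 Q : pred T) :
  allp e (fun a => P1 a || P2 a) Q = allp e P1 Q && allp e P2 Q.
Proof.
apply/idP/andP.
- move/forallP=> h; split; apply/forallP=> a; apply/forallP=> b;
  apply/implyP=> /andP[pa qb]; have := forallP (h a) b;
  by rewrite pa qb ?orbT => /implyP; apply.
- case=> /forallP h1 /forallP h2; apply/forallP=> a; apply/forallP=> b.
  apply/implyP=> /andP[/orP[pa|pa] qb].
  + by have := forallP (h1 a) b; rewrite pa qb => /implyP; apply.
  + by have := forallP (h2 a) b; rewrite pa qb => /implyP; apply.
Qed.

Lemma adjpUl (T : finType) (e : rel T) (P1 P2 Q : pred T) :
  adjp e (fun a => P1 a || P2 a) Q = adjp e P1 Q || adjp e P2 Q.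
Proof.
apply/idP/orP.
- case/existsP=> a /existsP[b /and3P[/orP[pa|pa] qb eab]].
  + by left; apply/existsP; exists a; apply/existsP; exists b; rewrite pa qb eab.
  + by right; apply/existsP; exists a; apply/existsP; exists b; rewrite pa qb eab.
- case=> /existsP[a /existsP[b /and3P[pa qb eab]]]; apply/existsP; exists a;
  apply/existsP; exists b; by rewrite pa ?orbT qb eab.
Qed.

Lemma allp_sym (T : finType) (e : rel T) (P Q : pred T) :
  symmetric e -> allp e P Q = allp e Q P.
Proof.
move=> se; apply/forallP/forallP=> h a; apply/forallP=> b; apply/implyP=> /andP[pa qb];
have := forallP (h b) a; rewrite pa qb se => /implyP; apply => //.
Qed.

Lemma adjp_sym (T : finType) (e : rel T) (P Q : pred T) :
  symmetric e -> adjp e P Q = adjp e Q P.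
Proof.
move=> se; apply/existsP/existsP=> -[a /existsP[b /and3P[pa qb eab]]];
exists b; apply/existsP; exists a; by rewrite pa qb se eab.
Qed.

Lemma allp_adjp (T : finType) (e : rel T) (P Q : pred T) a b :
  P a -> Q b -> allp e P Q -> adjp e P Q.
Proof.
move=> pa qb /forallP h; apply/existsP; exists a; apply/existsP; exists b.
have := forallP (h a) b; rewrite pa qb /= => ->; by [].
Qed.

Lemma reps_merge (T : finType) (f : T -> T) u v :
  u \in reps f -> u != v -> reps (merge f u v) = reps f :\ v.
Proof.
rewrite /reps inE => /eqP fu uv; apply/setP=> x; rewrite !inE /merge.
have [fxv|fxv] := eqVneq (f x) v.
- have [ux|nux] := eqVneq u x.
  + by rewrite -ux fu in fxv; rewrite fxv eqxx in uv.
  + by rewrite fxv eq_sym andNb.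
- have [xv|nxv] := eqVneq x v; last by [].
  by move: fxv; rewrite xv => /negbTE ->.
Qed.

Lemma adj_blk_mix (T : finType) (e : rel T) f x y :
  f x = x -> f y = y ->
  blk e f x y || mix e f x y = (x != y) && adjp e (clsf f x) (clsf f y).
Proof.
move=> fx fy; rewrite /blk /mix.
case: (x != y) => //=.
case ha: (allp e _ _) => /=; last by rewrite andbT.
symmetry; apply: (allp_adjp (a := x) (b := y) _ _ ha); by rewrite /clsf ?fx ?fy.
Qed.

Lemma clsf_merge_u (T : finType) (f : T -> T) u v :
  clsf (merge f u v) u =1 (fun a => clsf f u a || clsf f v a).
Proof.
move=> a; rewrite /clsf /merge; case: (eqVneq (f a) v) => [->|]; first by rewrite eqxx orbT.
by rewrite orbF.
Qed.

Lemma clsf_merge_o (T : finType) (f : T -> T) u v y :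
  y != u -> y != v -> clsf (merge f u v) y =1 clsf f y.
Proof.
move=> yu yv a; rewrite /clsf /merge; case: (eqVneq (f a) v) => [->|//].
by rewrite eq_sym (negbTE yu) eq_sym (negbTE yv).
Qed.

Lemma contract_rep (T : finType) (e : rel T) H f u v :
  symmetric e -> RepT e H f -> u \in reps f -> v \in reps f -> u != v ->
  RepT e (contract H u v u) (merge f u v).
Proof.
move=> se [HV HE] ur vr uv.
have Hreps := reps_merge ur uv.
have fu : f u = u by move: ur; rewrite inE => /eqP.
have fv : f v = v by move: vr; rewrite inE => /eqP.
have memV' : forall x, (x \in u |: (tverts H :\ u :\ v)) = (x \in reps f :\ v).
  move=> x; rewrite HV !inE; have [->|xu] := eqVneq x u; first by rewrite uv fu eqxx.
  by [].
split.
  by apply/setP=> x; rewrite Hreps /contract /= memV'.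
move=> x y; rewrite Hreps => xr' yr'.
have [xv xr] : x != v /\ x \in reps f by move: xr'; rewrite in_setD1 => /andP.
have [yv yr] : y != v /\ y \in reps f by move: yr'; rewrite in_setD1 => /andP.
have fx : f x = x by move: xr; rewrite inE => /eqP.
have fy : f y = y by move: yr; rewrite inE => /eqP.
rewrite /contract /= !memV' xr' yr' /=.
have tadjE : forall a b, a \in reps f -> b \in reps f ->
   tadj H a b = (a != b) && adjp e (clsf f a) (clsf f b).
  move=> a b ar br; rewrite /tadj; have [-> ->] := HE a b ar br.
  by apply: adj_blk_mix; [move: ar | move: br]; rewrite inE => /eqP.
have [xu|xu] := eqVneq x u.
- subst x; have [yu|yu] := eqVneq y u.
    by subst y; rewrite /blk /mix eqxx.
  have [Bu Ru] := HE u y ur yr; have [Bv Rv] := HE v y vr yr.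
  have uy : (u == y) = false by rewrite eq_sym (negbTE yu).
  have vy : (v == y) = false by rewrite eq_sym (negbTE yv).
  rewrite /= Bu Bv !tadjE // /blk /mix uy vy /=.
  rewrite (allp_ext e (clsf_merge_u f u v) (clsf_merge_o f yu yv)) allpUl.
  rewrite (adjp_ext e (clsf_merge_u f u v) (clsf_merge_o f yu yv)) adjpUl.
  by split; last rewrite andbC.
- have [yu|yu] := eqVneq y u.
  + subst y; have [Bu Ru] := HE u x ur xr; have [Bv Rv] := HE v x vr xr.
    have ux : (u == x) = false by rewrite eq_sym (negbTE xu).
    have vx : (v == x) = false by rewrite eq_sym (negbTE xv).
    rewrite /= Bu Bv !tadjE // /blk /mix ux vx (negbTE xu) /=.
    rewrite (allp_ext e (clsf_merge_o f xu xv) (clsf_merge_u f u v)).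
    rewrite (adjp_ext e (clsf_merge_o f xu xv) (clsf_merge_u f u v)).
    rewrite [allp e (clsf f x) _](allp_sym _ _ se) allpUl.
    rewrite [adjp e (clsf f x) _](adjp_sym _ _ se) adjpUl.
    by split; last rewrite andbC.
  + have [B R] := HE x y xr yr.
    rewrite /= B R /blk /mix.
    rewrite (allp_ext e (clsf_merge_o f xu xv) (clsf_merge_o f yu yv)).
    rewrite (adjp_ext e (clsf_merge_o f xu xv) (clsf_merge_o f yu yv)).
    by case: (x != y).
Qed.

Lemma allp_id (T : finType) (e : rel T) x y :
  allp e (clsf id x) (clsf id y) = e x y.
Proof.
apply/forallP/idP.
- by move=> h; have := forallP (h x) y; rewrite /clsf /= !eqxx.
- move=> exy a; apply/forallP=> b; apply/implyP=> /andP[/eqP -> /eqP ->] //.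
Qed.

Lemma adjp_id (T : finType) (e : rel T) x y :
  adjp e (clsf id x) (clsf id y) = e x y.
Proof.
apply/existsP/idP.
- by case=> a /existsP[b /and3P[/eqP -> /eqP -> ->]].
- move=> exy; exists x; apply/existsP; exists y; by rewrite /clsf /= !eqxx.
Qed.

Definition goodp (T : finType) (Inv : (T -> T) -> Prop) (f : T -> T) (uv : T * T) : Prop :=
  [/\ uv.1 \in reps f, uv.2 \in reps f, uv.1 != uv.2 & Inv (merge f uv.1 uv.2)].

Fixpoint build (T : finType) (e : rel T) (Inv : (T -> T) -> Prop) (x0 : T) (i : nat)
  : (T -> T) * trigraph T :=
  match i with
  | 0 => (id, graph_trigraph e)
  | i'.+1 =>
    let p := build e Inv x0 i' in
    let uv := epsilon (inhabits (x0, x0)) (goodp Inv p.1) in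
    (merge p.1 uv.1 uv.2, contract p.2 uv.1 uv.2 uv.1)
  end.

Lemma generic_tww (T : finType) (e : rel T) (Inv : (T -> T) -> Prop) :
  0 < #|T| -> simple_graph e -> Inv id ->
  (forall f, Inv f -> 1 < #|reps f| -> exists uv : T * T, goodp Inv f uv) ->
  (forall f x, Inv f -> x \in reps f -> #|[set y in reps f | mix e f x y]| <= 2) ->
  twin_width_le e 2.
Proof.
move=> n0 [se ie] Inv0 Hstep Hdeg.
have [x0 _] : exists x0 : T, x0 \in T by apply/card_gt0P.
pose st := build e Inv x0.
have Hst : forall i, i < #|T| ->
   [/\ Inv (st i).1, RepT e (st i).2 (st i).1 & #|reps (st i).1| = #|T| - i].
  elim=> [_|i IH lt].
  - have r0 : reps (@id T) = setT by apply/setP=> x; rewrite !inE eqxx.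
    split => //; last by rewrite /= r0 cardsT subn0.
    split; first by rewrite /= r0.
    move=> x y _ _ /=; rewrite /blk /mix allp_id adjp_id.
    split; first by case: (eqVneq x y) => [->|//]; rewrite ie.
    by case: (e x y); rewrite ?andbF ?andbT.
  - have [I1 R1 C1] := IH (ltnW lt).
    have gt1 : 1 < #|reps (st i).1| by rewrite C1; lia.
    have := epsilon_spec (inhabits (x0, x0)) (goodp Inv (st i).1) (Hstep _ I1 gt1).
    case=> ur vr uvn Inew.
    split => //.
    + by apply: contract_rep.
      set uv := epsilon _ _ in ur vr uvn Inew *.
      have -> : (st i.+1).1 = merge (st i).1 uv.1 uv.2 by [].
      rewrite reps_merge //; have := cardsD1 uv.2 (reps (st i).1).
      rewrite vr C1 /=; lia.
exists (fun i => (st i).2); split.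
- by [].
- move=> i lt; have [I1 [HV HE] C1] := Hst i (ltnW lt).
  have := epsilon_spec (inhabits (x0, x0)) (goodp Inv (st i).1) (Hstep _ I1 ltac:(rewrite C1; lia)).
  case=> ur vr uvn Inew.
  exists (epsilon (inhabits (x0, x0)) (goodp Inv (st i).1)).1.
  exists (epsilon (inhabits (x0, x0)) (goodp Inv (st i).1)).2.
  exists (epsilon (inhabits (x0, x0)) (goodp Inv (st i).1)).1.
  split; rewrite ?HV //.
  by rewrite !inE eqxx andbF.
- move=> i lt x; have [I1 [HV HE] C1] := Hst i lt.
  rewrite HV => xr.
  have -> : [set y in reps (st i).1 | tred (st i).2 x y] =
            [set y in reps (st i).1 | mix e (st i).1 x y].
    apply/setP=> y; rewrite !inE; case yr: ((st i).1 y == y) => //=.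
    have yr' : y \in reps (st i).1 by rewrite inE yr.
    by have [_ ->] := HE x y xr yr'.
  by apply: Hdeg.
- have [_ [HV _] C1] := Hst #|T|.-1 ltac:(lia).
  rewrite HV C1; lia.
Qed.
Definition kc (T : finType) (L : R) (a : T -> R) (x : T) : Z := Int_part (Rdiv (a x) L).

Local Open Scope R_scope.
Definition sp (T : finType) (L : R) (a : T -> R) (x : T) : R :=
  (a x - L * IZR (kc L a x)).

Lemma sp_bounds (T : finType) (L : R) (a : T -> R) x :
  (0 < L) -> (0 <= sp L a x /\ sp L a x < L).
Proof.
move=> L0; rewrite /sp /kc; have [h1 h2] := base_Int_part (Rdiv (a x) L).
set z := IZR _ in h1 h2 *.
have e1 : (a x = L * (a x / L)) by field; lra.
split.
- have : (L * z <= L * (a x / L)) by apply: Rmult_le_compat_l; lra.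
  lra.
- have : (L * (a x / L) < L * (z + 1)) by apply: Rmult_lt_compat_l; lra.
  lra.
Qed.

Lemma adj_real (T : finType) (e : rel T) (L : R) (a : T -> R) :
  (forall x y : T, x != y ->
      (e x y <-> exists t : R,
          (Rle (a x) t /\ Rle t (a x + L)) /\ (Rle (a y) t /\ Rle t (a y + L)))) ->
  forall x y, x != y -> (e x y <-> (a x - a y <= L /\ a y - a x <= L)).
Proof.
move=> h x y xy; rewrite h //; split.
- case=> t [[? ?] [? ?]]; lra.
- move=> [? ?]; exists (Rmax (a x) (a y)).
  have := Rmax_l (a x) (a y); have := Rmax_r (a x) (a y).
  case: (Rmax_Rle (a x) (a y) (Rmax (a x) (a y))) => _ _.
  destruct (Rle_dec (a x) (a y)).
  + rewrite Rmax_right //; lra.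
  + rewrite Rmax_left; lra.
Qed.

Local Close Scope R_scope.

Local Open Scope R_scope.

Definition adjR (T : finType) (e : rel T) (L : R) (a : T -> R) : Prop :=
  forall x y, x != y -> (e x y <-> (a x - a y <= L /\ a y - a x <= L)).

Lemma a_decomp (T : finType) (L : R) (a : T -> R) x :
  a x = L * IZR (kc L a x) + sp L a x.
Proof. rewrite /sp; ring. Qed.

Lemma P1 (T : finType) (e : rel T) L a x y :
  0 < L -> adjR e L a -> x != y -> kc L a x = kc L a y -> e x y.
Proof.
move=> L0 h xy kxy; apply/(h x y xy).
rewrite (a_decomp L a x) (a_decomp L a y) kxy.
have := sp_bounds a x L0; have := sp_bounds a y L0; lra.
Qed.

Lemma P2 (T : finType) (e : rel T) L a x y :
  0 < L -> adjR e L a -> (kc L a x + 2 <= kc L a y)%Z -> ~ e x y.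
Proof.
move=> L0 h kxy exy.
have xy : x != y by apply/eqP=> xy; rewrite xy in kxy; lia.
have [_ h2] := (h x y xy).1 exy.
move: h2; rewrite (a_decomp L a x) (a_decomp L a y).
have hz : IZR (kc L a x) + 2 <= IZR (kc L a y).
  rewrite -(plus_IZR _ 2); by apply: IZR_le.
have : L * (IZR (kc L a x) + 2) <= L * IZR (kc L a y) by apply: Rmult_le_compat_l; lra.
have := sp_bounds a x L0; have := sp_bounds a y L0; lra.
Qed.

Lemma P3 (T : finType) (e : rel T) L a x y :
  0 < L -> adjR e L a -> kc L a y = (kc L a x + 1)%Z ->
  (e x y <-> sp L a y <= sp L a x).
Proof.
move=> L0 h kxy.
have xy : x != y by apply/eqP=> xy; rewrite xy in kxy; lia.
rewrite (h x y xy) (a_decomp L a x) (a_decomp L a y) kxy plus_IZR.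
have := sp_bounds a x L0; have := sp_bounds a y L0.
split; [case=> ? ?|move=> ?]; [|split]; nra.
Qed.

Definition keyle (T : finType) L (a : T -> R) (x y : T) : Prop :=
  sp L a x < sp L a y \/ (sp L a x = sp L a y /\ (kc L a y <= kc L a x)%Z).

Lemma keyle_total (T : finType) L (a : T -> R) x y : keyle L a x y \/ keyle L a y x.
Proof.
rewrite /keyle; destruct (Rtotal_order (sp L a x) (sp L a y)) as [h|[h|h]]; try tauto.
destruct (Z.le_ge_cases (kc L a y) (kc L a x)); [left|right]; right; split; auto; lia.
Qed.

Lemma keyle_trans (T : finType) L (a : T -> R) x y z :
  keyle L a x y -> keyle L a y z -> keyle L a x z.
Proof.
rewrite /keyle => h1 h2.
destruct h1 as [h1|[h1 h1']]; destruct h2 as [h2|[h2 h2']].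
- left; lra.
- left; lra.
- left; lra.
- right; split; [lra|lia].
Qed.

Local Close Scope R_scope.

Lemma ex_min (T : finType) (le : T -> T -> Prop) (A : {set T}) x0 :
  (forall x y, le x y \/ le y x) -> (forall x y z, le x y -> le y z -> le x z) ->
  x0 \in A -> exists m, m \in A /\ forall y, y \in A -> le m y.
Proof.
move=> tot tr xA.
suff : forall s : seq T, forall x1, x1 \in s -> exists m, m \in s /\ forall y, y \in s -> le m y.
  move=> /(_ (enum A) x0); rewrite mem_enum => /(_ xA) [m [mA hm]].
  exists m; split; first by rewrite -mem_enum.
  by move=> y yA; apply: hm; rewrite mem_enum.
move=> s; elim: s => [//|z s IH] x1 _.
case: s IH => [_|w s IH].
  exists z; split; first by rewrite inE.
  move=> y; rewrite inE => /eqP ->; by case: (tot z z).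
have [m [ms hm]] := IH w (mem_head w s).
case: (tot z m) => hzm.
- exists z; split; first by rewrite inE eqxx.
  move=> y; rewrite in_cons => /orP[/eqP ->|ys]; first by case: (tot z z).
  by apply: tr hzm (hm y ys).
- exists m; split; first by rewrite in_cons ms orbT.
  by move=> y; rewrite in_cons => /orP[/eqP ->|ys]; [|apply: hm].
Qed.

Lemma card_le2 (T : finType) (S : {set T}) (g : T -> Z) z1 z2 :
  (forall y y', y \in S -> y' \in S -> g y = g y' -> y = y') ->
  (forall y, y \in S -> g y = z1 \/ g y = z2) -> #|S| <= 2.
Proof.
move=> inj hz.
rewrite -(cardsID [set y | Z.eqb (g y) z1] S).
have le1 : forall (B : {set T}) z, B \subset S -> (forall y, y \in B -> g y = z) -> #|B| <= 1.
  move=> B z sub hB; apply/card_le1_eqP => y y' yB y'B.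
  apply: inj; [exact: (subsetP sub)|exact: (subsetP sub)|by rewrite (hB y yB) (hB y' y'B)].
have := le1 (S :&: [set y | Z.eqb (g y) z1]) z1 (subsetIl _ _).
have := le1 (S :\: [set y | Z.eqb (g y) z1]) z2 (subsetDl _ _).
move=> h1 h2.
have : #|S :\: [set y | Z.eqb (g y) z1]| <= 1.
  apply: h1 => y; rewrite !inE => /andP[/Z.eqb_spec n yS].
  by case: (hz y yS).
have : #|S :&: [set y | Z.eqb (g y) z1]| <= 1.
  by apply: h2 => y; rewrite !inE => /andP[yS /Z.eqb_spec].
lia.
Qed.

Lemma merge_idem (T : finType) (f : T -> T) u v :
  (forall x, f (f x) = f x) -> f u = u -> u != v ->
  forall x, merge f u v (merge f u v x) = merge f u v x.
Proof.
move=> idem fu uv x; rewrite /merge.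
case: (eqVneq (f x) v) => [_|fxv].
- by rewrite fu (negbTE uv).
- by rewrite idem (negbTE fxv).
Qed.

Lemma merge_eq (T : finType) (f : T -> T) u v a b :
  u != v ->
  (merge f u v a = merge f u v b <->
   f a = f b \/ (f a = u /\ f b = v) \/ (f a = v /\ f b = u)).
Proof.
move=> uv; rewrite /merge.
case: (eqVneq (f a) v) => [fa|fa]; case: (eqVneq (f b) v) => [fb|fb].
- rewrite fa fb; tauto.
- split; first by move=> <-; right; right; split.
  case=> [h|[[h1 h2]|[h1 h2]]] //; [by rewrite -h fa eqxx in fb|by rewrite h1 in fa; move/eqP: uv].
- split; first by move=> ->; right; left; split.
  case=> [h|[[h1 h2]|[h1 h2]]] //; [by rewrite h fb eqxx in fa|by rewrite h2 in fb; move/eqP: uv].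
- split; first by left.
  case=> [h|[[h1 h2]|[h1 h2]]] //; [by rewrite h2 eqxx in fb|by rewrite h1 eqxx in fa].
Qed.

Definition rel1 (T : finType) L (p : T -> R) (M : {set T}) (f : T -> T) : Prop :=
  forall x y, f x = f y <-> (x = y \/ (x \in M /\ y \in M /\ kc L p x = kc L p y)).
Definition down (T : finType) L (p : T -> R) (M : {set T}) : Prop :=
  forall x y, x \in M -> y \notin M -> keyle L p x y.
Definition ci (T : finType) L (p : T -> R) (c : Z) (x : T) : Z := Z.max (kc L p x) c.
Definition rel2 (T : finType) L (p : T -> R) (c : Z) (f : T -> T) : Prop :=
  forall x y, f x = f y <-> ci L p c x = ci L p c y.
Definition InvU (T : finType) L (p : T -> R) (f : T -> T) : Prop :=
  (forall x, f (f x) = f x) /\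
  ((exists M, down L p M /\ rel1 L p M f) \/ (exists c, rel2 L p c f)).

Lemma mixE (T : finType) (e : rel T) f x y : mix e f x y ->
  [/\ x != y, (exists a b, [/\ f a = x, f b = y & e a b]) &
      (exists a b, [/\ f a = x, f b = y & ~~ e a b])].
Proof.
case/and3P=> xy /existsP[a /existsP[b /and3P[/eqP fa /eqP fb eab]]] nall.
split => //; first by exists a, b.
move: nall; rewrite /allp negb_forall => /existsP[a'].
rewrite negb_forall => /existsP[b']; rewrite negb_imply => /andP[/andP[/eqP fa' /eqP fb'] ne].
by exists a', b'.
Qed.

Lemma mix_sym (T : finType) (e : rel T) f x y : symmetric e -> mix e f x y = mix e f y x.
Proof. by move=> se; rewrite /mix eq_sym adjp_sym // allp_sym. Qed.

Lemma e_close (T : finType) (e : rel T) L p x y :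
  Rlt 0 L -> adjR e L p -> symmetric e -> e x y ->
  (kc L p y <= kc L p x + 1 /\ kc L p x <= kc L p y + 1)%Z.
Proof.
move=> L0 h se exy; split; apply/Z.nlt_ge => hlt.
- by apply: (P2 (x := x) (y := y) L0 h) => //; lia.
- apply: (P2 (x := y) (y := x) L0 h); first lia; by rewrite se.
Qed.

Lemma single_nomix (T : finType) (e : rel T) L p M f x y :
  Rlt 0 L -> adjR e L p -> symmetric e -> down L p M -> rel1 L p M f ->
  y \notin M -> f y = y -> mix e f x y = false.
Proof.
move=> L0 h se hd hr yM fy.
apply/negP => /mixE [xy [a [b [fa fb eab]]] [a' [b' [fa' fb' neab]]]].
have hb : forall b, f b = y -> b = y.
  move=> c; rewrite -{1}fy => /hr [//|[_ [yM' _]]]; by rewrite yM' in yM.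
rewrite (hb b fb) in eab; rewrite (hb b' fb') in neab.
have faa : f a = f a' by rewrite fa fa'.
case/hr: faa => [aa|[aM [a'M kaa]]].
  by move: neab; rewrite -aa eab.
have da := hd a y aM yM; have da' := hd a' y a'M yM.
move: da da'; rewrite /keyle.
have : (kc L p y = kc L p a \/ (kc L p a + 2 <= kc L p y) \/ (kc L p y + 2 <= kc L p a)
        \/ kc L p y = (kc L p a + 1) \/ kc L p a = (kc L p y + 1))%Z by lia.
case=> [k1|[k2|[k3|[k4|k5]]]] da da'.
- have a'y : a' != y by apply/eqP=> e1; rewrite e1 in a'M; rewrite a'M in yM.
  have ea'y : e a' y by apply: (P1 L0 h a'y); rewrite -kaa k1.
  by rewrite ea'y in neab.
- by apply: (P2 L0 h k2).
- by apply: (P2 L0 h k3); rewrite se.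
- have := (P3 L0 h k4).1 eab; case: da => [|[_ ?]]; [lra|lia].
- rewrite kaa in k5.
  have := (P3 L0 h k5).2; rewrite se (negbTE neab).
  case: da' => [?|[? _]]; move=> hh; (have : false by apply: hh; lra) => //.
Qed.

Lemma repE (T : finType) (f : T -> T) y : y \in reps f -> f y = y.
Proof. by rewrite inE => /eqP. Qed.

Lemma deg_bound (T : finType) (e : rel T) L p f x :
  Rlt 0 L -> adjR e L p -> symmetric e -> InvU L p f -> x \in reps f ->
  #|[set y in reps f | mix e f x y]| <= 2.
Proof.
move=> L0 h se [idem [[M [hd hr]]|[c hr]]] xr; have fx := repE xr.
- have inM : forall y, y \in reps f -> mix e f x y -> x \in M /\ y \in M.
    move=> y yr mxy; split.
    + apply/negPn/negP => xM.
      by rewrite mix_sym // (single_nomix y L0 h se hd hr xM fx) in mxy.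
    + apply/negPn/negP => yM.
      by rewrite (single_nomix x L0 h se hd hr yM (repE yr)) in mxy.
  apply: (card_le2 (g := kc L p) (z1 := (kc L p x - 1)%Z) (z2 := (kc L p x + 1)%Z)).
  + move=> y y'; rewrite !inE => /andP[/eqP fy my] /andP[/eqP fy' my'] kyy.
    have [_ yM] := inM y ltac:(by rewrite inE fy) my.
    have [_ y'M] := inM y' ltac:(by rewrite inE fy') my'.
    have : f y = f y' by apply/hr; right.
    by rewrite fy fy'.
  + move=> y; rewrite !inE => /andP[/eqP fy my].
    have [xM yM] := inM y ltac:(by rewrite inE fy) my.
    case/mixE: my => xy [a [b [fa fb eab]]] _.
    have ka : kc L p a = kc L p x.
      have : f a = f x by rewrite fa fx.
      by case/hr => [->|[_ [_ ->]]].
    have kb : kc L p b = kc L p y.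
      have : f b = f y by rewrite fb fy.
      by case/hr => [->|[_ [_ ->]]].
    have kxy : kc L p x <> kc L p y.
      move=> kk; have : f x = f y by apply/hr; right.
      by rewrite fx fy => exy; rewrite exy eqxx in xy.
    have := e_close L0 h se eab; lia.
- apply: (card_le2 (g := ci L p c) (z1 := (ci L p c x - 1)%Z) (z2 := (ci L p c x + 1)%Z)).
  + move=> y y'; rewrite !inE => /andP[/eqP fy _] /andP[/eqP fy' _] kyy.
    have : f y = f y' by apply/hr.
    by rewrite fy fy'.
  + move=> y; rewrite !inE => /andP[/eqP fy my].
    case/mixE: my => xy [a [b [fa fb eab]]] _.
    have ka : ci L p c a = ci L p c x by apply/hr; rewrite fa fx.
    have kb : ci L p c b = ci L p c y by apply/hr; rewrite fb fy.
    have kxy : ci L p c x <> ci L p c y.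
      move=> kk; have : f x = f y by apply/hr.
      by rewrite fx fy => exy; rewrite exy eqxx in xy.
    have := e_close L0 h se eab; move: ka kb kxy; rewrite /ci; lia.
Qed.

Lemma step2 (T : finType) L (p : T -> R) f c :
  (forall x, f (f x) = f x) -> rel2 L p c f -> 1 < #|reps f| ->
  exists uv, goodp (InvU L p) f uv.
Proof.
move=> idem hr0 /card_gt1P [r1 [r2 [r1r r2r r12]]].
suff main : forall c, (exists x0, (kc L p x0 <= c)%Z) -> rel2 L p c f ->
    exists uv, goodp (InvU L p) f uv.
  case: (boolP [exists x0, (kc L p x0 <=? c)%Z]).
    by move=> /existsP[x0 /Z.leb_spec0 hx]; apply: (main c) => //; exists x0.
  rewrite negb_exists => /forallP hall.
  have hall' : forall x, (c < kc L p x)%Z.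
    by move=> x; have := hall x; case: (Z.leb_spec0 (kc L p x) c) => //= ?; lia.
  have [m [_ hm]] := ex_min (le := fun x y => (kc L p x <= kc L p y)%Z) (A := setT) (x0 := r1)
     ltac:(move=> x y; lia) ltac:(move=> x y z; lia) (in_setT r1).
  apply: (main (kc L p m)); first by exists m; lia.
  move=> x y; rewrite hr0 /ci.
  have := hall' x; have := hall' y; have := hm x (in_setT x); have := hm y (in_setT y); lia.
clear hr0; move=> {}c [x0 hx0] hr.
have fr1 := repE r1r; have fr2 := repE r2r.
case: (boolP [exists y, (c <? kc L p y)%Z]); last first.
  rewrite negb_exists => /forallP hall.
  have hall' : forall x, (kc L p x <= c)%Z.
    by move=> x; have := hall x; case: (Z.ltb_spec0 c (kc L p x)) => //= ?; lia.
  have : f r1 = f r2 by apply/hr; rewrite /ci; have := hall' r1; have := hall' r2; lia.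
  by rewrite fr1 fr2 => e12; rewrite e12 eqxx in r12.
move=> /existsP[y0 hy0].
have [y [yD hy]] := ex_min (le := fun x y => (kc L p x <= kc L p y)%Z)
   (A := [set y | (c <? kc L p y)%Z]) (x0 := y0)
     ltac:(move=> x y; lia) ltac:(move=> x y z; lia) ltac:(by rewrite inE).
move: yD; rewrite inE => /Z.ltb_spec0 yD.
have hmin : forall a, (kc L p a <= c \/ kc L p y <= kc L p a)%Z.
  move=> a; case: (Z.ltb_spec0 c (kc L p a)) => ha; last lia.
  by right; apply: hy; rewrite inE; apply/Z.ltb_spec0.
have ur : f x0 \in reps f by rewrite inE idem.
have vr : f y \in reps f by rewrite inE idem.
have uv : f x0 != f y.
  apply/eqP => /hr; rewrite /ci; lia.
exists (f x0, f y); split => //=.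
split; first by apply: merge_idem => //; apply: repE.
right; exists (kc L p y) => a b.
have Ha : forall a, f a = f x0 <-> ci L p c a = c.
  move=> z; rewrite hr /ci; lia.
have Hb : forall a, f a = f y <-> ci L p c a = kc L p y.
  move=> z; rewrite hr /ci; lia.
rewrite (merge_eq f a b uv) (hr a b) (Ha a) (Ha b) (Hb a) (Hb b) /ci.
have := hmin a; have := hmin b; lia.
Qed.

Lemma step1 (T : finType) L (p : T -> R) (n : nat) : forall M f,
  #|~: M| <= n -> (forall x, f (f x) = f x) -> down L p M -> rel1 L p M f ->
  1 < #|reps f| -> exists uv, goodp (InvU L p) f uv.
Proof.
elim: n => [|n IH] M f hn idem hd hr hgt.
all: case: (boolP [exists y, y \notin M]); last first.
1,3: rewrite negb_exists => /forallP hall;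
  have allM : forall x, x \in M by move=> x; have := hall x; rewrite negbK.
1,2: move: (hgt) => /card_gt1P [r1 [r2 [r1r _ _]]];
  have [m [_ hm]] := ex_min (le := fun x y => (kc L p x <= kc L p y)%Z) (A := setT) (x0 := r1)
     ltac:(move=> x y; lia) ltac:(move=> x y z; lia) (in_setT r1);
  apply: (step2 (c := (kc L p m - 1)%Z)) => // x y;
  rewrite hr /ci; have := hm x (in_setT x); have := hm y (in_setT y);
  split; [case=> [->|[_ [_ ->]]]; lia|move=> hh; right; split; [|split]; [by []|by []|lia]].
- move=> /existsP[y yM]; have : 0 < #|~: M| by apply/card_gt0P; exists y; rewrite inE.
  lia.
move=> /existsP[y0 y0M].
have [y [yM hy]] := ex_min (le := keyle L p) (A := ~: M) (x0 := y0)
   (@keyle_total T L p) (@keyle_trans T L p) ltac:(by rewrite inE).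
move: yM; rewrite inE => yM.
have hd' : down L p (y |: M).
  move=> x z; rewrite !inE => /orP[/eqP ->|xM] /norP[zy zM].
  - by apply: hy; rewrite inE.
  - by apply: hd.
have hn' : #|~: (y |: M)| <= n.
  have := cardsC M; have := cardsC (y |: M); rewrite cardsU1 yM; lia.
have fy : f y = y.
  have : f (f y) = f y by rewrite idem.
  by case/hr => [//|[fyM [yM' _]]]; rewrite yM' in yM.
case: (boolP [exists x, (x \in M) && Z.eqb (kc L p x) (kc L p y)]); last first.
  rewrite negb_exists => /forallP hno.
  apply: (IH (y |: M)) => // a b; rewrite hr !inE.
  have hno' : forall x, x \in M -> kc L p x <> kc L p y.
    move=> x xM kk; have := hno x; by rewrite xM kk Z.eqb_refl.
  split.
  - case=> [->|[aM [bM kab]]]; [by left|right; split; [by rewrite aM orbT|split; [by rewrite bM orbT|by []]]].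
  - case=> [->|[/orP[/eqP ay|aM] [/orP[/eqP bY|bM] kab]]]; first by left.
    + by left; rewrite ay bY.
    + by exfalso; apply: (hno' b bM); rewrite -kab ay.
    + by exfalso; apply: (hno' a aM); rewrite kab bY.
    + by right.
move=> /existsP[x /andP[xM /Z.eqb_spec kxy]].
have ur : f x \in reps f by rewrite inE idem.
have vr : y \in reps f by rewrite inE fy.
have uv : f x != y.
  apply/eqP; rewrite -{1}fy => /hr [xy|[_ [yM' _]]]; last by rewrite yM' in yM.
  by rewrite -xy xM in yM.
exists (f x, y); split => //=.
split; first by apply: merge_idem => //; apply: repE.
left; exists (y |: M); split => // a b.
have Ha : forall a, f a = f x <-> (a \in M /\ kc L p a = kc L p y).
  move=> z; rewrite hr; split.
  - by case=> [->|[zM [_ ->]]].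
  - by case=> zM kz; right; rewrite zM xM kz kxy.
have Hb : forall a, f a = y <-> a = y.
  move=> z; rewrite -{1}fy hr; split; last by left.
  by case=> [//|[_ [yM' _]]]; rewrite yM' in yM.
rewrite (merge_eq f a b uv) (hr a b) (Ha a) (Ha b) (Hb a) (Hb b) !inE.
split.
- case=> [[->|[aM [bM kab]]]|[[[aM ka] bY]|[aY [bM kb]]]].
  + by left.
  + by right; rewrite aM bM !orbT.
  + by right; rewrite bY eqxx aM orbT ka.
  + by right; rewrite aY eqxx bM orbT kb.
- case=> [->|[/orP[/eqP aY|aM] [/orP[/eqP bY|bM] kab]]]; first by left; left.
  + by left; left; rewrite aY bY.
  + by right; right; split => //; split => //; rewrite -kab aY.
  + by right; left; split => //; split => //; rewrite kab bY.
  + by left; right.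
Qed.

Theorem mainTheorem5 (T : finType) (e : rel T) :
  0 < #|T| -> simple_graph e -> unit_interval_graph e -> twin_width_le e 2.
Proof.
move=> n0 [se ie] [L [p [L0 hiv]]].
have h : adjR e L p by apply: adj_real.
apply: (generic_tww (Inv := InvU L p)) => //.
- split => //; left; exists set0; split.
    by move=> x y; rewrite inE.
  move=> x y; split; first by move=> ->; left.
  by case=> [->|[]]; rewrite ?inE.
- move=> f [idem [[M [hd hr]]|[c hr]]] hgt.
  + exact: (@step1 T L p #|~: M| M f (leqnn _) idem hd hr hgt).
  + exact: (step2 idem hr hgt).
- move=> f x hI xr; exact: (deg_bound L0 h se hI xr).
Qed.
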